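(* Let $G$ be of type $A_{n-1}$, let $1\le s,r\le n-1$ and $p=\lfloor rs/n\rfloor$. Then $$w_{s,r}=(s_s s_{s-1}\cdots s_{p+1})(s_{s+1}s_s\cdots s_{p+2})\cdots(s_{s+r-p-1}\cdots s_{r+1}s_r),$$ i.e. $w_{s,r}=\prod_{j=p+1}^{r}(s_{s+j-p-1}s_{s+j-p-2}\cdots s_j)$ with the factors ordered by increasing $j$.
   Context: $G$ is the simple adjoint group of type $A_{n-1}$ (i.e. $PSL(n,\mathbb{C})$) with maximal torus $T$, Borel $B\supseteq T$, simple roots $\alpha_1,\dots,\alpha_{n-1}$ in the standard numbering, simple reflections $s_i$, fundamental weights $\omega_i$ (all minuscule); $\lambda_s$ is the one-parameter subgroup of $T$ with $\langle\alpha_j,\lambda_s\rangle=\delta_{sj}$. $P=P_{S\setminus\{\alpha_r\}}$, $W^{S\setminus\{\alpha_r\}}$ the minimal coset representatives of $W/W_{S\setminus\{\alpha_r\}}$ with the Bruhat order. $w_{s,r}$ is the unique Bruhat-minimal element $w\in W^{S\setminus\{\alpha_r\}}$ with $\langle w(\omega_r),\lambda_s\rangle\le0$ (equivalently, such that the Schubert variety $X(w)=\overline{BwP/P}$ has a point at which some $\lambda_s(\mathbb{G}_m)$-invariant section of a positive power of $\mathcal{L}(m\omega_r)$ is nonzero, $m$ least with $m\omega_r$ in the root lattice). *)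

(* Defs.v *)
From HB Require Import structures.
From mathcomp Require Import all_boot all_order all_algebra fingroup perm.
Import GRing.Theory Num.Theory.

(* Weyl group W of type A_{n-1} = 'S_n, acting on weights (vectors in Q^n,
   i.e. functions 'I_n -> rat) by  (w . mu)_i = mu (w i).  With mathcomp's
   perm product ((x*y) i = y (x i)) this is a LEFT action:
   wact (x * y) = wact x \o wact y, so the group product x * y of 'S_n is the
   product  x y  in the Weyl group. *)
Definition wact (n : nat) (w : 'S_n) (mu : 'I_n -> rat) : 'I_n -> rat :=
  fun i => mu (w i).

(* simple reflection s_i (1 <= i <= n-1), swapping coordinates i-1 and i
   (0-based), i.e. the reflection in alpha_i = e_i - e_{i+1} (1-based).
   Out-of-range indices give the identity (never used). *)
Definition sref (n i : nat) : 'S_n :=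
  match (insub i.-1 : option 'I_n), (insub i : option 'I_n) with
  | Some a, Some b => if (0 < i)%N then tperm a b else 1%g
  | _, _ => 1%g
  end.

Definition simple_word (n : nat) (ws : seq nat) : bool :=
  all (fun i => (0 < i < n)%N) ws.

Definition word_prod (n : nat) (ws : seq nat) : 'S_n :=
  (\prod_(i <- ws) sref n i)%g.

Definition is_length (n : nat) (w : 'S_n) (k : nat) : Prop :=
  (exists ws, simple_word n ws /\ size ws = k /\ word_prod n ws = w) /\
  (forall ws, simple_word n ws -> word_prod n ws = w -> (k <= size ws)%N).

Definition is_reflection (n : nat) (t : 'S_n) : Prop :=
  exists (x : 'S_n) (i : nat), (0 < i < n)%N /\ t = ((sref n i) ^ x)%g.

Inductive bruhat_le (n : nat) (u : 'S_n) : 'S_n -> Prop :=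
| bruhat_refl : bruhat_le n u u
| bruhat_step (x t : 'S_n) (k1 k2 : nat) :
    bruhat_le n u x -> is_reflection n t -> is_length n x k1 ->
    is_length n (x * t)%g k2 -> (k1 < k2)%N -> bruhat_le n u (x * t)%g.

Definition WJ (n r : nat) : {set 'S_n} :=
  <<[set sref n (nat_of_ord j) | j : 'I_n & (0 < j)%N && (nat_of_ord j != r)]>>%g.

Definition min_coset_rep (n r : nat) (w : 'S_n) : Prop :=
  forall v, v \in WJ n r -> forall k1 k2,
    is_length n w k1 -> is_length n (w * v)%g k2 -> (k1 <= k2)%N.

Local Open Scope ring_scope.

Definition fund_weight (n r : nat) : 'I_n -> rat :=
  fun i => (if (nat_of_ord i < r)%N then 1 else 0) - r%:R / n%:R.

(* one-parameter subgroup lambda_s (fundamental coweight), as an element of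
   the dual, realized via the standard pairing: <alpha_j, lambda_s> = delta_sj *)
Definition lambda_cw (n s : nat) : 'I_n -> rat :=
  fun i => (if (nat_of_ord i < s)%N then 1 else 0) - s%:R / n%:R.

Definition pairing (n : nat) (mu lam : 'I_n -> rat) : rat :=
  \sum_(i < n) mu i * lam i.

Definition wsr_cond (n s r : nat) (w : 'S_n) : Prop :=
  pairing n (wact n w (fund_weight n r)) (lambda_cw n s) <= 0.

Definition is_min_wsr (n s r : nat) (w : 'S_n) : Prop :=
  min_coset_rep n r w /\ wsr_cond n s r w /\
  forall v, min_coset_rep n r v -> wsr_cond n s r v -> bruhat_le n v w -> v = w.

(* Main.v *)
Require Import Defs.
From mathcomp Require Import all_boot all_order all_algebra fingroup perm.
From mathcomp Require Import zify.
Set Warnings "-notation-overridden -ambiguous-paths".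
Set Implicit Arguments.
Unset Strict Implicit.

Definition invn n (w : 'S_n) : nat :=
  \sum_(a < n) \sum_(b < n) ((a < b)%N && (w b < w a)%N).

Arguments invn {n}.

Lemma sref_tperm n (i j : 'I_n) : (j:nat) = (i:nat).+1 -> sref n j = tperm i j.
Proof.
move=> Hj; rewrite /sref Hj /= valK.
have -> : (insub (val i).+1 : option 'I_n) = Some j by rewrite -Hj valK.
by [].
Qed.

Definition tau (k x : nat) := if x == k.-1 then k else if x == k then k.-1 else x.

Lemma tperm_val n (i j : 'I_n) (x : 'I_n) : (j:nat) = (i:nat).+1 ->
  val (tperm i j x) = tau j x.
Proof.
move=> Hj; rewrite /tau Hj /=.
case: tpermP => [->|->|/eqP Hxi /eqP Hxj]; rewrite ?Hj ?eqxx //.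
  by case: eqP => //; lia.
rewrite -Hj !val_eqE (negbTE Hxi) (negbTE Hxj) //.
Qed.

Lemma sum_ind2 n (x y : 'I_n) :
  \sum_(a < n) \sum_(b < n) ((a == x) && (b == y) : nat) = 1.
Proof.
rewrite (bigD1 x) //= [X in _ + X]big1; last first.
  by move=> a Ha; rewrite big1 // => b _; rewrite (negbTE Ha).
rewrite (bigD1 y) //= !eqxx big1 // => b Hb.
by rewrite (negbTE Hb) andbF.
Qed.

Lemma invn_swap n (i j : 'I_n) (w : 'S_n) : (j:nat) = (i:nat).+1 ->
  (w i < w j)%N -> invn (tperm i j * w) = (invn w).+1.
Proof.
move=> Hj Hw; rewrite /invn.
set s := tperm i j.
under eq_bigr => a _ do under eq_bigr => b _ do rewrite !permM.
rewrite (reindex_inj (@perm_inj _ s)).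
under eq_bigr => a _ do rewrite (reindex_inj (@perm_inj _ s)).
under eq_bigr => a _ do under eq_bigr => b _ do rewrite /s !tpermK.
have key : forall a b : 'I_n, ((s a < s b)%N && (w b < w a)%N : nat) =
   ((a < b)%N && (w b < w a)%N) + ((a == j) && (b == i)).
  have ij : (i == j) = false by apply/negbTE/eqP => /(congr1 val) /=; lia.
  have ji : (j == i) = false by rewrite eq_sym.
  move=> a b; rewrite /s !tperm_val // /tau Hj /= -Hj !val_eqE.
  have cs : forall x : 'I_n, x = i \/ x = j \/
     ((x == i) = false /\ (x == j) = false /\ (x:nat) <> i /\ (x:nat) <> j).
    move=> x; case: (eqVneq x i); first by left.
    case: (eqVneq x j); first by right; left.
    move=> xj xi; right; right; repeat split; try done;
      move/val_inj => E; [move: xi|move: xj]; by rewrite E eqxx.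
  case: (cs a) => [->|[->|[-> [-> [? ?]]]]]; case: (cs b) => [->|[->|[-> [-> [? ?]]]]];
  rewrite ?ij ?ji ?eqxx /=; lia.
under eq_bigr => a _ do under eq_bigr => b _ do rewrite /s key.
under eq_bigr => a _ do rewrite big_split /=.
by rewrite big_split /= sum_ind2 addn1.
Qed.

Lemma invnV n (w : 'S_n) : invn (w^-1)%g = invn w.
Proof.
rewrite /invn (reindex_inj (@perm_inj _ w)).
under eq_bigr => a _ do rewrite (reindex_inj (@perm_inj _ w)).
under eq_bigr => a _ do under eq_bigr => b _ do rewrite !permK.
rewrite exchange_big /=.
by apply: eq_bigr => a _; apply: eq_bigr => b _; rewrite andbC.
Qed.

Lemma invn1 n : invn (1 : 'S_n)%g = 0.
Proof.
rewrite /invn big1 // => a _; rewrite big1 // => b _; rewrite !perm1.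
have : ~~ ((a < b) && (b < a))%N by apply/negP => /andP[]; lia.
by move/negbTE ->.
Qed.

Definition GR {n} r (w : 'S_n) := forall i j : 'I_n, (i < j)%N ->
  (w i < r)%N = (w j < r)%N -> (w i < w j)%N.

Lemma GR_le n r (u w : 'S_n) : GR r u -> GR r w ->
  (forall i, (u i < r)%N = (w i < r)%N) -> forall i, (u i <= w i)%N.
Proof.
move=> Gu Gw Hs.
suff H : forall k (i : 'I_n), (i : nat) = k -> (u i <= w i)%N by move=> i; exact: H.
elim/ltn_ind => k IH i Hik.
rewrite leqNgt; apply/negP => Hlt.
set a := (u^-1)%g (w i).
have ua : u a = w i by rewrite /a permKV.
have sb : (u a < r)%N = (u i < r)%N by rewrite ua -Hs.
have ai : (a < i)%N.
  case: (ltngtP a i) => // H.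
    by have := Gu _ _ H (esym sb); rewrite ua; lia.
  by move: ua; rewrite (val_inj H) => E; move: Hlt; rewrite E ltnn.
have := IH a (ltac:(lia)) a erefl.
have := Gw a i ai (ltac:(by rewrite -Hs sb Hs)).
rewrite ua; lia.
Qed.

Lemma GR_uniq n r (u w : 'S_n) : GR r u -> GR r w ->
  (forall i, (u i < r)%N = (w i < r)%N) -> u = w.
Proof.
move=> Gu Gw Hs; apply/permP => i; apply: val_inj; apply/eqP.
by rewrite eqn_leq (@GR_le _ _ _ _ Gu Gw) //= (@GR_le _ _ _ _ Gw Gu) // => j; rewrite Hs.
Qed.

Lemma sref_adj n k : (0 < k < n)%N -> exists i j : 'I_n,
  [/\ (j:nat) = (i:nat).+1, (j:nat) = k & sref n k = tperm i j].
Proof.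
case/andP => k0 kn.
have k1 : (k.-1 < n)%N by lia.
exists (Ordinal k1), (Ordinal kn); split => //=; first by lia.
by apply: (@sref_tperm n (Ordinal k1) (Ordinal kn)) => /=; lia.
Qed.

Lemma invn_swap_dn n (i j : 'I_n) (w : 'S_n) : (j:nat) = (i:nat).+1 ->
  (w j < w i)%N -> (invn (tperm i j * w)).+1 = invn w.
Proof.
move=> Hj Hw; set y := (tperm i j * w)%g.
have -> : w = (tperm i j * y)%g by rewrite /y mulgA tperm2 mul1g.
rewrite invn_swap //.
by rewrite /y !permM tpermL tpermR.
Qed.

Lemma invn_sref_le n k (w : 'S_n) : (0 < k < n)%N ->
  (invn (sref n k * w) <= (invn w).+1)%N.
Proof.
move=> /sref_adj [i [j [Hj _ ->]]].
case: (ltngtP (w i) (w j)) => H.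
- by rewrite invn_swap.
- by move: (invn_swap_dn Hj H) => <-; apply: leqW; apply: leqnSn.
- have : i = j by apply: (perm_inj (s := w)); apply: val_inj.
  move=> E; move: Hj; rewrite E; lia.
Qed.

Lemma word_prod_cons n k ws : word_prod n (k :: ws) = (sref n k * word_prod n ws)%g.
Proof. by rewrite /word_prod big_cons. Qed.

Lemma word_bound n ws : simple_word n ws -> (invn (word_prod n ws) <= size ws)%N.
Proof.
elim: ws => [|k ws IH] /=.
  by rewrite /word_prod big_nil invn1.
move=> /andP [Hk Hws]; rewrite word_prod_cons.
have := invn_sref_le (word_prod n ws) Hk; have := IH Hws; lia.
Qed.

Lemma adj_incr n (w : 'S_n) :
  (forall i j : 'I_n, (j:nat) = (i:nat).+1 -> (w i < w j)%N) ->
  forall i j : 'I_n, (i < j)%N -> (w i < w j)%N.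
Proof.
move=> H.
suff S : forall d (i j : 'I_n), (j:nat) = (i + d.+1)%N -> (w i < w j)%N.
  move=> i j ij; apply: (S (j - i).-1) => //; lia.
elim=> [|d IH] i j E; first by apply: H; lia.
have mn : (i + d.+1 < n)%N by have := ltn_ord j; lia.
apply: (@ltn_trans (w (Ordinal mn))); first exact: IH.
by apply: H => /=; lia.
Qed.

Lemma GR_n n (w : 'S_n) : (forall i j : 'I_n, (i < j)%N -> (w i < w j)%N) -> GR n w.
Proof. by move=> H i j ij _; apply: H. Qed.

Lemma reduced_word n (w : 'S_n) : exists ws,
  [/\ simple_word n ws, size ws = invn w & word_prod n ws = w].
Proof.
suff S : forall m (w : 'S_n), invn w = m -> exists ws,
  [/\ simple_word n ws, size ws = invn w & word_prod n ws = w] by exact: S.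
elim=> [|m IH] {}w Hm.
- have Hinc : forall i j : 'I_n, (j:nat) = (i:nat).+1 -> (w i < w j)%N.
    move=> i j Hj; case: (ltngtP (w i) (w j)) => // H.
      by have := invn_swap_dn Hj H; rewrite Hm.
    have : i = j by apply: (perm_inj (s := w)); apply: val_inj.
    by move=> E; move: Hj; rewrite E; lia.
  have E : w = 1%g.
    apply: (@GR_uniq n n); first exact: GR_n (adj_incr Hinc).
      by apply: GR_n => i j; rewrite !perm1.
    by move=> i; rewrite !ltn_ord.
  by exists [::]; split => //; rewrite /word_prod big_nil E.
- have [i [j [Hj Hd]]] : exists i j : 'I_n, (j:nat) = (i:nat).+1 /\ (w j < w i)%N.
    case: (boolP [exists i : 'I_n, [exists j : 'I_n,
             ((j:nat) == (i:nat).+1) && (w j < w i)%N]]).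
      by case/existsP => i /existsP [j /andP [/eqP ? ?]]; exists i, j.
    move=> N.
    have Hinc : forall i j : 'I_n, (j:nat) = (i:nat).+1 -> (w i < w j)%N.
      move=> i j Hj; case: (ltngtP (w i) (w j)) => // H.
        by exfalso; move/negP: N; apply; apply/existsP; exists i;
           apply/existsP; exists j; rewrite Hj eqxx.
      have : i = j by apply: (perm_inj (s := w)); apply: val_inj.
      by move=> E; move: Hj; rewrite E; lia.
    have E1 : w = 1%g.
      apply: (@GR_uniq n n); first exact: GR_n (adj_incr Hinc).
        by apply: GR_n => i' j'; rewrite !perm1.
      by move=> i'; rewrite !ltn_ord.
    by move: Hm; rewrite E1 invn1.
  set y := (tperm i j * w)%g.
  have Ey := invn_swap_dn Hj Hd.
  have [ws [sw sz pw]] := IH y (ltac:(rewrite -/y in Ey; lia)).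
  exists (val j :: ws); split.
  + by rewrite /= sw andbT; apply/andP; split; [lia|exact: ltn_ord].
  + by rewrite /= sz -Ey.
  + rewrite word_prod_cons pw /y (@sref_tperm n i j) //.
    by rewrite mulgA tperm2 mul1g.
Qed.

Lemma is_length_inv n (w : 'S_n) : is_length n w (invn w).
Proof.
split; first by have [ws [? ? ?]] := reduced_word w; exists ws.
by move=> ws sw <-; apply: word_bound.
Qed.

Lemma is_length_eq n (w : 'S_n) k : is_length n w k -> k = invn w.
Proof.
case=> [[ws [sw [sz pw]]] H].
have [ws' [sw' sz' pw']] := reduced_word w.
have := H ws' sw' pw'; have := word_bound sw; rewrite pw; lia.
Qed.


Lemma all_below (a : nat -> bool) lo k :
  (forall e, (lo <= e)%N -> (e.+1 < lo + k)%N -> a e.+1 -> a e) ->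
  forall d y, (lo <= y - d)%N -> (d <= y)%N -> (y < lo + k)%N -> a y -> a (y - d).
Proof.
move=> H; elim=> [|d IH] y H1 H2 H3 Hy; first by rewrite subn0.
have := IH y ltac:(lia) ltac:(lia) H3 Hy.
have -> : (y - d = (y - d.+1).+1)%N by lia.
by apply: H; lia.
Qed.

Lemma dc_count (a : nat -> bool) lo k :
  (forall e, (lo <= e)%N -> (e.+1 < lo + k)%N -> a e.+1 -> a e) ->
  forall x, (lo <= x < lo + k)%N -> a x = (x < lo + count a (iota lo k))%N.
Proof.
elim: k => [|k IH] H x Hx; first by lia.
have H' : forall e, (lo <= e)%N -> (e.+1 < lo + k)%N -> a e.+1 -> a e.
  by move=> e h1 h2; apply: H => //; lia.
have -> : iota lo k.+1 = iota lo k ++ [:: lo + k] by rewrite -addn1 iotaD.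
rewrite count_cat /= addn0.
case: (boolP (a (lo + k))) => Ht.
- have allT : forall y, (lo <= y <= lo + k)%N -> a y.
    move=> y hy; have -> : y = ((lo + k) - (lo + k - y))%N by lia.
    apply: (all_below H) => //; lia.
  have -> : count a (iota lo k) = k.
    rewrite -[RHS](size_iota lo k) -count_predT; apply: eq_in_count => y.
    by rewrite mem_iota => hy; rewrite allT //; lia.
  by rewrite allT //; lia.
- rewrite addn0.
  case: (ltnP x (lo + k)) => hx.
    by apply: IH => //; lia.
  have -> : x = (lo + k)%N by lia.
  rewrite (negbTE Ht); have := count_size a (iota lo k); rewrite size_iota; lia.
Qed.

Lemma comb (a : nat -> bool) n s r p c :
  count a (iota 0 n) = r -> count a (iota 0 s) = c -> (c <= p)%N ->
  (0 < s < n)%N -> (p <= s)%N -> (p <= r)%N ->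
  (forall e, (e.+1 < n)%N -> ~~ a e -> a e.+1 -> e.+1 = s /\ (p <= c)%N) ->
  forall x, (x < n)%N -> a x = (x < p)%N || (s <= x < s + r - p)%N.
Proof.
move=> Hr Hc Hcp Hs Hps Hpr Hm.
have D1 : forall x, (0 <= x < 0 + s)%N -> a x = (x < 0 + count a (iota 0 s))%N.
  apply: dc_count => e _ he1 ha; apply/negPn/negP => hn.
  have [E _] := Hm e ltac:(lia) hn ha; lia.
have Hsplit : count a (iota s (n - s)) = (r - c)%N.
  move: Hr; rewrite -{1}(subnKC (ltnW (proj2 (andP Hs)))) iotaD count_cat Hc add0n; lia.
have D2 : forall x, (s <= x < s + (n - s))%N -> a x = (x < s + count a (iota s (n - s)))%N.
  apply: dc_count => e he he2 ha; apply/negPn/negP => hn.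
  have [E _] := Hm e ltac:(lia) hn ha; lia.
rewrite Hc /= in D1; rewrite Hsplit in D2.
have Ecp : c = p.
  case: (ltnP c p) => h; last by lia.
  have h1 : a (s.-1) = false by rewrite D1; lia.
  have h2 : a s by rewrite D2; lia.
  have [_ ?] := Hm s.-1 ltac:(lia) (negbT h1) ltac:(by have -> : (s.-1).+1 = s by lia).
  lia.
subst c => x hx.
case: (ltnP x s) => h.
  by rewrite D1; lia.
by rewrite D2; lia.
Qed.

Lemma count_sum (b : nat -> bool) n : count b (iota 0 n) = \sum_(i < n) b i.
Proof.
elim: n => [|n IH]; first by rewrite big_ord0.
have -> : iota 0 n.+1 = iota 0 n ++ [:: n] by rewrite -addn1 iotaD.
by rewrite count_cat IH big_ord_recr /= addn0.
Qed.

Lemma count_lt n r : (r <= n)%N -> count (fun x => x < r)%N (iota 0 n) = r.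
Proof.
move=> h; rewrite -(subnKC h) iotaD count_cat add0n.
have -> : count (fun x => x < r)%N (iota r (n - r)) = 0.
  apply/eqP; rewrite -leqn0 leqNgt -has_count; apply/hasP => -[x]; rewrite mem_iota; lia.
rewrite addn0 -[RHS](size_iota 0 r) -count_predT; apply: eq_in_count => y.
by rewrite mem_iota.
Qed.


Lemma ord3 n (i j : 'I_n) : (j:nat) = (i:nat).+1 -> forall x : 'I_n,
  x = i \/ x = j \/
     ((x == i) = false /\ (x == j) = false /\ (x:nat) <> i /\ (x:nat) <> j).
Proof.
move=> Hj x; case: (eqVneq x i); first by left.
case: (eqVneq x j); first by right; left.
move=> xj xi; right; right; repeat split; try done;
  move/val_inj => E; [move: xi|move: xj]; by rewrite E eqxx.
Qed.

Lemma tperm_ij n (i j : 'I_n) : (j:nat) = (i:nat).+1 ->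
  [/\ (i == j) = false, (j == i) = false, tperm i j i = j & tperm i j j = i].
Proof.
move=> Hj; have ij : (i == j) = false by apply/negbTE/eqP => /(congr1 val) /=; lia.
by split => //; rewrite ?tpermL ?tpermR // eq_sym.
Qed.

Lemma tperm_other n (i j x : 'I_n) : (x == i) = false -> (x == j) = false -> tperm i j x = x.
Proof. by move=> h1 h2; rewrite tpermD // eq_sym ?h1 ?h2. Qed.


Lemma tau_lt n (i j : 'I_n) : (j:nat) = (i:nat).+1 -> forall x y : 'I_n,
  (x < y)%N -> ~~ ((x == i) && (y == j)) -> (tperm i j x < tperm i j y)%N.
Proof.
move=> Hj x y.
have [ij ji ti tj] := tperm_ij Hj.
case: (ord3 Hj x) => [->|[->|[e1 [e2 [e3 e4]]]]];
case: (ord3 Hj y) => [->|[->|[f1 [f2 [f3 f4]]]]].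
all: try rewrite ti; try rewrite tj; try rewrite (tperm_other e1 e2);
  try rewrite (tperm_other f1 f2).
all: rewrite ?eqxx ?ij ?ji ?e1 ?e2 ?f1 ?f2 /= => xy H; try lia.
Qed.

Lemma swap_GR n r (i j : 'I_n) (w : 'S_n) : (j:nat) = (i:nat).+1 ->
  GR r w -> (w i < r)%N != (w j < r)%N -> GR r (tperm i j * w)%g.
Proof.
move=> Hj G D x y xy; rewrite !permM => Hb.
apply: G => //; apply: tau_lt => //.
apply/negP => /andP [/eqP ex /eqP ey]; subst x y.
have [_ _ ti tj] := tperm_ij Hj.
by move: Hb; rewrite ti tj => E; move: D; rewrite E eqxx.
Qed.

Lemma bruhat_mono n (u w : 'S_n) : bruhat_le n u w -> u = w \/ (invn u < invn w)%N.
Proof.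
elim=> [|x t k1 k2 _ IH _ L1 L2 lt]; first by left.
right; move: lt; rewrite (is_length_eq L2) (is_length_eq L1) => lt.
by case: IH => [->|h] //; lia.
Qed.

Lemma bruhat_up n (u x : 'S_n) (i j : 'I_n) : (j:nat) = (i:nat).+1 ->
  (x i < x j)%N -> bruhat_le n u x -> bruhat_le n u (tperm i j * x)%g.
Proof.
move=> Hj Hx B.
have E : (tperm i j * x = x * (sref n j ^ x))%g.
  by rewrite (sref_tperm Hj) conjgE !mulgA mulgV mul1g.
rewrite E; apply: (@bruhat_step n u x _ (invn x) (invn (x * (sref n j ^ x))%g)) => //.
- exists x, (j:nat); split => //; apply/andP; split; [lia | exact: ltn_ord].
- exact: is_length_inv.
- exact: is_length_inv.
- by rewrite -E invn_swap.
Qed.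


Definition aw n r (w : 'S_n) (x : nat) : bool :=
  [exists i : 'I_n, ((i:nat) == x) && (w i < r)%N].

Lemma aw_ord n r (w : 'S_n) (i : 'I_n) : aw r w i = (w i < r)%N.
Proof.
apply/existsP/idP => [[k /andP [/eqP E H]]|H]; last by exists i; rewrite eqxx.
by rewrite -(val_inj E).
Qed.

Definition CntO n s r (w : 'S_n) := \sum_(x < n) ((x < s)%N && (w x < r)%N).

Lemma aw_total n r (w : 'S_n) : (r <= n)%N -> count (aw r w) (iota 0 n) = r.
Proof.
move=> h; rewrite count_sum.
under eq_bigr => i _ do rewrite aw_ord.
rewrite -[RHS](count_lt h) count_sum.
by rewrite [RHS](reindex_inj (@perm_inj _ w)).
Qed.

Lemma aw_cnt n s r (w : 'S_n) : (s <= n)%N -> count (aw r w) (iota 0 s) = CntO s r w.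
Proof.
move=> h; rewrite /CntO.
under eq_bigr => i _ do rewrite -aw_ord.
rewrite -(count_sum (fun x => (x < s)%N && aw r w x)).
have -> : iota 0 n = iota 0 s ++ iota s (n - s) by rewrite -{1}(subnKC h) iotaD.
rewrite count_cat.
have -> : count (fun x => (x < s)%N && aw r w x) (iota s (n - s)) = 0.
  apply/eqP; rewrite -leqn0 leqNgt -has_count; apply/hasP => -[x]; rewrite mem_iota.
  by move=> hx /andP [hs _]; lia.
rewrite addn0; apply: eq_in_count => x; rewrite mem_iota => hx.
by have -> : (x < s)%N by lia.
Qed.

Lemma cnt_swap n s r (i j : 'I_n) (w : 'S_n) : (j:nat) = (i:nat).+1 ->
  (w j < r)%N -> (r <= w i)%N ->
  (CntO s r (tperm i j * w)%g <= CntO s r w + (j == s :> nat))%N.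
Proof.
move=> Hj h1 h2; rewrite /CntO.
under eq_bigr => x _ do rewrite permM.
rewrite (reindex_inj (@perm_inj _ (tperm i j))).
under eq_bigr => x _ do rewrite tpermK.
have [ij ji ti tj] := tperm_ij Hj.
have -> : ((j == s :> nat) : nat) = \sum_(x < n) ((x == j) && (j == s :> nat) : nat).
  by rewrite (bigD1 j) //= eqxx big1 ?addn0 // => x /negbTE ->.
rewrite -big_split /=; apply: leq_sum => x _.
case: (ord3 Hj x) => [->|[->|[e1 [e2 [e3 e4]]]]].
- by rewrite ti ij /= (ltnNge (w i) r) h2 !andbF.
- rewrite tj eqxx /= h1 !andbT.
  case: (ltnP i s) => hi; case: (ltnP j s) => hj; case: eqP => he //=; lia.
- by rewrite (tperm_other e1 e2) e2 /= addn0.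
Qed.

Lemma chain n s r p (w0 : 'S_n) : (0 < s < n)%N -> (p <= s)%N -> (p <= r)%N ->
  (r <= n)%N -> GR r w0 ->
  (forall i : 'I_n, (w0 i < r)%N = (i < p)%N || (s <= i < s + r - p)%N) ->
  forall w : 'S_n, GR r w -> (CntO s r w <= p)%N -> bruhat_le n w0 w.
Proof.
move=> Hs Hps Hpr Hrn G0 A0.
suff S : forall m (w : 'S_n), invn w = m -> GR r w -> (CntO s r w <= p)%N ->
  bruhat_le n w0 w by move=> w; exact: S.
elim/ltn_ind => m IH w Hm Gw Cw.
case: (boolP [exists i : 'I_n, [exists j : 'I_n,
   [&& (j:nat) == (i:nat).+1, (r <= w i)%N, (w j < r)%N &
       ((j:nat) != s) || (CntO s r w < p)%N]]]).
- case/existsP => i /existsP [j /and4P [/eqP Hj h1 h2 h3]].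
  have [_ _ ti tj] := tperm_ij Hj.
  set w' := (tperm i j * w)%g.
  have w'i : w' i = w j by rewrite /w' permM ti.
  have w'j : w' j = w i by rewrite /w' permM tj.
  have Ew : w = (tperm i j * w')%g by rewrite /w' mulgA tperm2 mul1g.
  have G' : GR r w'.
    apply: swap_GR => //; rewrite h2; apply/negP => /negPn h; lia.
  have I' : invn w = (invn w').+1.
    by rewrite {1}Ew invn_swap // w'i w'j; lia.
  have C' : (CntO s r w' <= p)%N.
    have := cnt_swap s Hj h2 h1; rewrite -/w'.
    move: h3; case: eqP => /= hjs h3; lia.
  rewrite Ew; apply: bruhat_up => //; first by rewrite w'i w'j; lia.
  by apply: (IH (invn w')) => //; lia.
- move=> N.
  have Hsn : (s <= n)%N by lia.
  have Hc := aw_cnt r w Hsn.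
  have Ht := aw_total w Hrn.
  have Hcomb := comb Ht Hc Cw Hs Hps Hpr.
  have E : w0 = w.
    apply: (@GR_uniq n r) => // i; rewrite A0 -aw_ord Hcomb //.
    move=> e he ha hb.
    have he1 : (e < n)%N by lia.
    have := aw_ord r w (Ordinal he1); have := aw_ord r w (Ordinal he).
    rewrite /= => E2 E1; rewrite E1 in ha; rewrite E2 in hb.
    case: (boolP (((e.+1) != s) || (CntO s r w < p)%N)) => hh.
      exfalso; move/negP: N; apply; apply/existsP; exists (Ordinal he1).
      apply/existsP; exists (Ordinal he); rewrite /= eqxx hb hh andbT /=.
      by rewrite andbT leqNgt.
    by move: hh; rewrite negb_or negbK => /andP [/eqP ? ?]; split => //; lia.
  by rewrite E; exact: bruhat_refl.
Qed.


Lemma sref_out n k : ~~ (0 < k < n)%N -> sref n k = 1%g.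
Proof.
move=> hk; rewrite /sref; case: insubP => [a _ ea|_] //; case: insubP => [b _ eb|_] //.
case: ifP => // k0; exfalso; move/negP: hk; apply.
by rewrite k0 -eb ltn_ord.
Qed.

Lemma sref_blk n r k (x : 'I_n) : k != r -> (sref n k x < r)%N = (x < r)%N.
Proof.
move=> kr; case: (boolP (0 < k < n)%N) => hk; last first.
  by rewrite sref_out // perm1.
have [i [j [Hj Hk ->]]] := sref_adj hk.
have [ij ji ti tj] := tperm_ij Hj.
case: (ord3 Hj x) => [->|[->|[e1 [e2 [e3 e4]]]]].
- by rewrite ti; apply/idP/idP; move/eqP: kr; lia.
- by rewrite tj; apply/idP/idP; move/eqP: kr; lia.
- by rewrite (tperm_other e1 e2).
Qed.

Lemma WJ_blk n r (v : 'S_n) : v \in WJ n r -> forall x : 'I_n, (v x < r)%N = (x < r)%N.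
Proof.
set H := [set v : 'S_n | [forall x, (v x < r)%N == (x < r)%N]].
have gH : group_set H.
  apply/group_setP; split.
    by rewrite inE; apply/forallP => x; rewrite perm1.
  move=> u u'; rewrite !inE => /forallP hu /forallP hv; apply/forallP => x.
  by rewrite permM (eqP (hv _)) (eqP (hu _)).
have sub : WJ n r \subset H.
  rewrite /WJ (gen_subG _ (Group gH)); apply/subsetP => u /imsetP [j].
  rewrite inE => /andP [_ jr] ->; rewrite inE; apply/forallP => x.
  by rewrite sref_blk.
by move=> /(subsetP sub); rewrite inE => /forallP h x; rewrite (eqP (h x)).
Qed.

Lemma GR_mcr n r (w : 'S_n) : GR r w -> min_coset_rep n r w.
Proof.
move=> G v hv k1 k2 L1 L2.
rewrite (is_length_eq L1) (is_length_eq L2) /invn.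
apply: leq_sum => a _; apply: leq_sum => b _.
case: (boolP ((a < b)%N && (w b < w a)%N)) => //= /andP [ab ba].
rewrite permM permM ab /=.
have hb : (w b < r)%N.
  case: (boolP (w b < r)%N) => // hb; have : (w a < r)%N = (w b < r)%N.
    by rewrite (negbTE hb); apply/negbTE; rewrite -leqNgt; lia.
  by move/(G a b ab); lia.
have ha : (r <= w a)%N.
  rewrite leqNgt; apply/negP => ha.
  by have := G a b ab (ltac:(by rewrite ha hb)); lia.
have := WJ_blk hv (w b); have := WJ_blk hv (w a).
rewrite hb (ltnNge (w a) r) ha /= => h1 h2.
have : (v (w a) >= r)%N by rewrite leqNgt h1.
lia.
Qed.

Lemma adj_incr_blk n r (g : 'S_n) :
  (forall i j : 'I_n, (j:nat) = (i:nat).+1 -> (j:nat) != r -> (g i < g j)%N) ->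
  forall i j : 'I_n, (i < j)%N -> (i < r)%N = (j < r)%N -> (g i < g j)%N.
Proof.
move=> H.
suff S : forall d (i j : 'I_n), (j:nat) = (i + d.+1)%N -> (i < r)%N = (j < r)%N ->
  (g i < g j)%N.
  move=> i j ij; apply: (S (j - i).-1) => //; lia.
elim=> [|d IH] i j E B; first by apply: H; lia.
have mn : (i + d.+1 < n)%N by have := ltn_ord j; lia.
apply: (@ltn_trans (g (Ordinal mn))); first by apply: IH => //=; lia.
by apply: H => /=; lia.
Qed.

Lemma mcr_GR n r (w : 'S_n) : min_coset_rep n r w -> GR r w.
Proof.
move=> M.
set g := (w^-1)%g.
have Hadj : forall i j : 'I_n, (j:nat) = (i:nat).+1 -> (j:nat) != r -> (g i < g j)%N.
  move=> i j Hj jr.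
  have hv : sref n j \in WJ n r.
    apply: mem_gen; apply/imsetP; exists j => //.
    by rewrite inE jr andbT; lia.
  have h := M _ hv _ _ (is_length_inv w) (is_length_inv _).
  have E1 : invn (w * sref n j)%g = invn (tperm i j * g)%g.
    by rewrite -[LHS]invnV invMg (sref_tperm Hj) tpermV.
  have E2 : invn w = invn g by rewrite /g invnV.
  move: h; rewrite E1 E2 => h.
  case: (ltngtP (g i) (g j)) => // H.
    by move: h; rewrite -(invn_swap_dn Hj H); lia.
  have : i = j by apply: (perm_inj (s := g)); apply: val_inj.
  by move=> E; move: Hj; rewrite E; lia.
have Hinc := adj_incr_blk Hadj.
move=> i j ij B; case: (ltngtP (w i) (w j)) => // H.
  have := Hinc _ _ H (esym B); rewrite /g !permK; lia.
have : i = j by apply: (perm_inj (s := w)); apply: val_inj.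
by move=> E; move: ij; rewrite E; lia.
Qed.


From mathcomp Require Import ring.
Module RingPart.
Import GRing.Theory Num.Theory.
Local Open Scope ring_scope.

Lemma sum_blk n r (w : 'S_n) : (r <= n)%N -> \sum_(i < n) ((w i < r)%N : nat) = r.
Proof.
move=> h; transitivity (count (aw r w) (iota 0 n)); last exact: aw_total.
by rewrite count_sum; apply: eq_bigr => i _; rewrite aw_ord.
Qed.

Lemma sum_lt n s : (s <= n)%N -> \sum_(i < n) ((i < s)%N : nat) = s.
Proof.
move=> h; transitivity (count (fun x => x < s)%N (iota 0 n)); last exact: count_lt.
by rewrite count_sum.
Qed.

Lemma ifnat (b : bool) : ((if b then 1 else 0) : rat) = (b : nat)%:R.
Proof. by case: b; rewrite /= ?mulr1n. Qed.

Lemma pairing_eq n s r (w : 'S_n) : (0 < n)%N -> (s <= n)%N -> (r <= n)%N ->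
  pairing n (wact n w (fund_weight n r)) (lambda_cw n s) =
  ((CntO s r w)%:R - (r * s)%N%:R / n%:R)%R.
Proof.
move=> n0 hs hr.
rewrite /pairing /wact /fund_weight /lambda_cw.
set al := (r%:R / n%:R : rat)%R; set be := (s%:R / n%:R : rat)%R.
have E : forall i : 'I_n,
  ((if (w i < r)%N then 1 else 0) - al) * ((if (i < s)%N then 1 else 0) - be) =
   ((i < s)%N && (w i < r)%N : nat)%:R - be * ((w i < r)%N : nat)%:R
     - al * ((i < s)%N : nat)%:R + al * be :> rat.
  move=> i; rewrite !ifnat.
  have -> : (((i < s)%N && (w i < r)%N : nat)%:R = ((w i < r)%N : nat)%:R * ((i < s)%N : nat)%:R :> rat)%R.
    by case: (w i < r)%N; case: (i < s)%N; rewrite /= ?mul1r ?mul0r.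
  ring.
rewrite (eq_bigr _ (fun i _ => E i)) !big_split /= ?sumrB ?sumrN -!mulr_sumr sumr_const card_ord.
rewrite -!natr_sum sum_blk // sum_lt // /CntO /al /be.
have nz : (n%:R != 0 :> rat)%R by rewrite pnatr_eq0 -lt0n.
rewrite natrM; field.
exact: nz.
Qed.

Lemma cond_iff n s r (w : 'S_n) : (0 < n)%N -> (s <= n)%N -> (r <= n)%N ->
  wsr_cond n s r w <-> (CntO s r w <= r * s %/ n)%N.
Proof.
move=> n0 hs hr; rewrite /wsr_cond pairing_eq // subr_le0 ler_pdivlMr; last by rewrite ltr0n.
by rewrite -natrM ler_nat leq_divRL.
Qed.

End RingPart.
Import RingPart.


Lemma move_step n r (Q : 'S_n) (P : nat -> bool) e : (e.+1 < n)%N -> GR r Q ->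
  (forall i : 'I_n, (Q i < r)%N = P i) -> P e -> ~~ P e.+1 ->
  GR r (sref n e.+1 * Q)%g /\
  (forall i : 'I_n, ((sref n e.+1 * Q)%g i < r)%N = P (tau e.+1 i)).
Proof.
move=> he G HP Pe Pe1.
have he0 : (e < n)%N by lia.
have Hj : ((Ordinal he : nat) = (Ordinal he0 : nat).+1) by [].
rewrite (sref_tperm Hj); split.
  apply: swap_GR => //; rewrite !HP /= Pe.
  by move: Pe1; case: (P e.+1).
by move=> i; rewrite permM HP (tperm_val i Hj).
Qed.

Lemma inner n r s p m (Q : 'S_n) : (p <= s)%N -> (s + r - p <= n)%N -> (p < m <= r)%N ->
  GR r Q -> (forall i : 'I_n, (Q i < r)%N = (i < m)%N || (s + m - p <= i < s + r - p)%N) ->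
  forall u, (u <= s - p)%N ->
  let R := (\prod_(s - p - u <= k < s - p) sref n (s + m - p - 1 - k))%g in
  GR r (R * Q)%g /\ forall i : 'I_n, ((R * Q)%g i < r)%N =
    [|| (i < m.-1)%N, ((i:nat) == s + m - p - 1 - (s - p - u))%N | (s + m - p <= i < s + r - p)%N].
Proof.
move=> h1 h2 h3 G HQ; elim=> [|u IH] hu R.
- rewrite /R subn0 big_geq // mul1g; split => // i.
  by rewrite HQ; apply/idP/idP; lia.
- have [G' H'] := IH ltac:(lia).
  have -> : R = (sref n (s + m - p - 1 - (s - p - u.+1)) *
     \prod_(s - p - u <= k < s - p) sref n (s + m - p - 1 - k))%g.
    rewrite /R big_ltn; last by lia.
    by have -> : (s - p - u.+1).+1 = (s - p - u)%N by lia.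
  set e := (s + m - p - 1 - (s - p - u))%N.
  have -> : (s + m - p - 1 - (s - p - u.+1) = e.+1)%N by rewrite /e; lia.
  rewrite -mulgA.
  have he : (e.+1 < n)%N by rewrite /e; lia.
  have Pe : [|| (e < m.-1)%N, (e == e)%N | (s + m - p <= e < s + r - p)%N].
    by rewrite eqxx orbT.
  have Pe1 : ~~ [|| (e.+1 < m.-1)%N, (e.+1 == e)%N | (s + m - p <= e.+1 < s + r - p)%N].
    rewrite /e; apply/negP; lia.
  have [G2 H2] := move_step (e := e) (P := fun i => [|| (i < m.-1)%N, (i == e)%N |
      (s + m - p <= i < s + r - p)%N]) he G' H' Pe Pe1.
  split => // i; rewrite H2 /tau /=.
  case: eqP => E1; case: eqP => E2; rewrite /e in E1 E2 *; lia.
Qed.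

Lemma outer n r s p : (p <= s)%N -> (s + r - p <= n)%N -> (p <= r)%N ->
  forall u, (u <= r - p)%N ->
  let Q := (\prod_(r.+1 - u <= j < r.+1)
              \prod_(0 <= k < s - p) sref n (s + j - p - 1 - k))%g in
  GR r Q /\ forall i : 'I_n, (Q i < r)%N =
     ((i < (r.+1 - u).-1)%N || (s + (r.+1 - u) - p - 1 <= i < s + r - p)%N).
Proof.
move=> h1 h2 h3; elim=> [|u IH] hu Q.
- rewrite /Q subn0 big_geq // ; split; first by move=> i j ij _; rewrite !perm1.
  by move=> i; rewrite perm1; apply/idP/idP; lia.
- have [G H] := IH ltac:(lia).
  set m := (r.+1 - u.+1)%N.
  have Em : (r.+1 - u = m.+1)%N by rewrite /m; lia.
  rewrite Em in G H.
  have -> : Q = ((\prod_(0 <= k < s - p) sref n (s + m - p - 1 - k)) *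
      \prod_(m.+1 <= j < r.+1) \prod_(0 <= k < s - p) sref n (s + j - p - 1 - k))%g.
    by rewrite /Q -/m big_ltn //; lia.
  have H' : forall i : 'I_n, ((\prod_(m.+1 <= j < r.+1)
       \prod_(0 <= k < s - p) sref n (s + j - p - 1 - k))%g i < r)%N =
       (i < m)%N || (s + m - p <= i < s + r - p)%N.
    by move=> i; rewrite H; apply/idP/idP; lia.
  have := inner h1 h2 (m := m) ltac:(rewrite /m; lia) G H' (u := s - p) (leqnn _).
  rewrite subnn /= => -[G2 H2]; split => // i.
  by rewrite H2; apply/idP/idP; lia.
Qed.


Unset Implicit Arguments.

Theorem lemma5p8 (n s r : nat) :
  (1 <= s <= n - 1)%N -> (1 <= r <= n - 1)%N ->
  let p := (r * s %/ n)%N in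
  let w0 : 'S_n :=
    (\prod_(p.+1 <= j < r.+1) \prod_(0 <= k < s - p) sref n (s + j - p - 1 - k))%g in
  is_min_wsr n s r w0 /\ (forall w : 'S_n, is_min_wsr n s r w -> w = w0).
Proof.
move=> hs hr p w0.
have n0 : (0 < n)%N by lia.
have d1 : (p * n <= r * s)%N by apply: leq_trunc_div.
have d2 : (r * s < p.+1 * n)%N by apply: ltn_ceil.
have hps : (p <= s)%N by nia.
have hpr : (p <= r)%N by nia.
have h2 : (s + r - p <= n)%N by nia.
have [G0 A0'] := @outer n r s p hps h2 hpr (r - p) (leqnn _).
have Eu : (r.+1 - (r - p) = p.+1)%N by lia.
rewrite Eu -/w0 in G0 A0'.
have A0 : forall i : 'I_n, (w0 i < r)%N = (i < p)%N || (s <= i < s + r - p)%N.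
  by move=> i; rewrite A0'; apply/idP/idP; lia.
have C0 : (CntO s r w0 <= p)%N.
  rewrite -aw_cnt; last by lia.
  rewrite -[X in (_ <= X)%N](count_lt hps) leq_eqVlt; apply/orP; left; apply/eqP.
  apply: eq_in_count => x; rewrite mem_iota => hx.
  have hxn : (x < n)%N by lia.
  by have := aw_ord r w0 (Ordinal hxn); rewrite /= A0 /= => ->; apply/idP/idP; lia.
have hsn : (0 < s < n)%N by lia.
have hrn : (r <= n)%N by lia.
have Ch := chain hsn hps hpr hrn G0 A0.
have cond0 : wsr_cond n s r w0 by apply/cond_iff => //; lia.
have cnd : forall v : 'S_n, wsr_cond n s r v -> (CntO s r v <= p)%N.
  by move=> v /cond_iff; apply => //; lia.
split.
- split; first exact: GR_mcr.
  split => // v Mv Cv B.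
  have B' := Ch v (mcr_GR Mv) (cnd v Cv).
  case: (bruhat_mono B) => // h1; case: (bruhat_mono B') => [->//|h2'].
  lia.
- move=> w [Mw [Cw Minw]].
  by symmetry; apply: Minw; [exact: GR_mcr | exact: cond0 | exact: Ch (mcr_GR Mw) (cnd w Cw)].
Qed.
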